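(* Let $n>1$, let $\mathcal{X}=\{-1,1\}^n$, and let $\mathcal{P}\subseteq[0,1]$ be a Lebesgue measurable set with Lebesgue measure $\mu(\mathcal{P})>0$. Let $\mathcal{K}$ be the set of admissible controllers, i.e. maps $K:\mathcal{X}\to\mathbb{R}^n$, $X=(X_0,\dots,X_{n-1})\mapsto (K_0(X),\dots,K_{n-1}(X))$, such that for each $k$ the value $K_k(X)$ depends only on $X_0,\dots,X_{k-1}$, and $|K_k(X)|\leq 1$ for all $X,k$. For $K\in\mathcal{K}$ and $p\in[0,1]$ let \[ ELG_K(p)\doteq\frac{1}{n}\sum_{X\in\mathcal{X}}p^{n_h(X)}(1-p)^{n-n_h(X)}\sum_{k=0}^{n-1}\log\bigl(1+K_k(X)X_k\bigr), \] where $n_h(X)=\#\{i:X_i=1\}$, with conventions $\log 0=-\infty$, $0\cdot(-\infty)=0$. Let $K^*\in\mathcal{K}$ be the controller \[ K_k^*(X)=\frac{\int_{p\in\mathcal{P}}p^{q_k}(1-p)^{k-q_k}(2p-1)\,dp}{\int_{p\in\mathcal{P}}p^{q_k}(1-p)^{k-q_k}\,dp},\qquad q_k=\#\{i\in\{0,\dots,k-1\}:X_i=1\}, \] (the unique maximizer of $K\mapsto\int_{\mathcal{P}}ELG_K(p)\,dp$ over $\mathcal{K}$), and let $K_0^*$ denote the static linear controller with constant gain $K_0^*=2\bar p-1$ at every stage and every sample path, where $\bar p=\frac{1}{\mu(\mathcal{P})}\int_{\mathcal{P}}p\,dp$ (the optimal static linear controller). Then \[ \int_{p\in\mathcal{P}}ELG_{K^*}(p)\,dp\;>\;\int_{p\in\mathcal{P}}ELG_{K_0^*}(p)\,dp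 . \]
   Context: Interpretation: $n$ flips of a coin with unknown probability of heads $p\in\mathcal{P}$ and even-money payoff; $X_k=1$ is heads, $X_k=-1$ tails; the bet at stage $k$ is $K_k(X)V_k$ and wealth evolves as $V_{k+1}=(1+K_k(X)X_k)V_k$, so $ELG_K(p)=\frac1n\mathbb{E}\log(V_n/V_0)$. A static linear controller is one with $K_k(X)\equiv K_0$ constant for all $k$ and $X$. *)

(* Defs.v *)
From mathcomp Require Import all_boot all_order all_algebra.
From mathcomp Require Import all_classical all_reals all_analysis.

Set Implicit Arguments.
Unset Strict Implicit.
Unset Printing Implicit Defensive.

Import Order.TTheory GRing.Theory Num.Theory.
Local Open Scope classical_set_scope.
Local Open Scope ring_scope.

(* Stage k in 'I_n ; a sample path X = (X_0,...,X_{n-1}) in {-1,1}^n is encoded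
   as a finite function 'I_n -> bool, with [true] = heads (+1), [false] = tails (-1). *)
Definition path (n : nat) := {ffun 'I_n -> bool}.

Section Defs.
Variable R : realType.

Definition lmu : set R -> \bar R := @completed_lebesgue_measure R.

Definition lmeasurable (A : set R) : Prop :=
  @measurable _ (caratheodory_type (R:=R) (@wlength R idfun)^*%mu) A.

Definition lint (A : set R) (f : R -> \bar R) : \bar R :=
  \int[@completed_lebesgue_measure R]_(x in A) f x.

Definition sgnb (b : bool) : R := if b then 1 else -1.

Definition controller (n : nat) := path n -> 'I_n -> R.

(* admissible controllers (not needed in the statement; for reference) *)
Definition admissible (n : nat) (K : controller n) : Prop :=
  (forall (X Y : path n) (k : 'I_n), (forall i : 'I_n, (i < k)%N -> X i = Y i) -> K X k = K Y k) /\
  (forall (X : path n) (k : 'I_n), `|K X k| <= 1).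

Definition nh (n : nat) (X : path n) : nat := #|[set i | X i]|.

Definition qk (n : nat) (X : path n) (k : 'I_n) : nat :=
  #|[set i : 'I_n | (i < k)%N && X i]|.

(* log with the convention log 0 = -oo (the argument is >= 0 for admissible K) *)
Definition logE (x : R) : \bar R := if 0 < x then (ln x)%:E else -oo%E.

(* expected log growth; in \bar R, 0 * -oo = 0 holds by the library convention *)
Definition ELG (n : nat) (K : controller n) (p : R) : \bar R :=
  ((n%:R)^-1)%:E *
  (\sum_(X : path n)
     ((p ^+ nh X * (1 - p) ^+ (n - nh X))%:E *
      \sum_(k < n) logE (1 + K X k * sgnb (X k))))%E.

Definition Kstar (n : nat) (P : set R) : controller n :=
  fun X k =>
    let q := qk X k in
    fine (lint P (fun p => (p ^+ q * (1 - p) ^+ (k - q) * (2 * p - 1))%:E)) /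
    fine (lint P (fun p => (p ^+ q * (1 - p) ^+ (k - q))%:E)).

Definition pbar (P : set R) : R :=
  fine (lint P (fun p => p%:E)) / fine (lmu P).

Definition static_ctrl (n : nat) (c : R) : controller n := fun _ _ => c.

End Defs.

(* Main.v *)
Require Import Defs.
From mathcomp Require Import all_boot all_order all_algebra.
From mathcomp Require Import all_classical all_reals all_analysis.
From mathcomp Require Import lra ring measurable_realfun.
Import Order.TTheory GRing.Theory Num.Theory.
Local Open Scope classical_set_scope.
Local Open Scope ring_scope.

Lemma memS (T : Type) (f : T -> bool) x : (x \in [set y | f y]) = f x.
Proof. apply/idP/idP; rewrite in_setE //. Qed.

Section Main.
Variable R : realType.
Variable n : nat.
Let mu := @completed_lebesgue_measure R.
Let T := caratheodory_type (R:=R) (@wlength R idfun)^*%mu.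
Variable P : set R.
Hypothesis mP : lmeasurable P.
Hypothesis P01 : P `<=` `[0, 1].
Hypothesis Ppos : (0 < lmu P)%E.

Let mP' : measurable (P : set T). Proof. exact: mP. Qed.

Lemma mu_fin : (mu P < +oo)%E.
Proof.
have e1 : mu `[0,1] = 1%E.
  rewrite (_ : mu `[0,1] = lebesgue_measure `[0,1]%classic) //.
  by rewrite lebesgue_measure_itv /= lte_fin ltr01 -EFinD subr0.
have m01 : measurable (`[0,1] : set T).
  by apply: sub_caratheodory; exact: measurable_itv.
have := @le_measure _ _ _ mu P `[0,1]%classic; rewrite !inE => /(_ mP' m01 P01) h.
have fin01 : (mu `[0%R,1%R] < +oo)%E by rewrite e1 ltry.
exact: (le_lt_trans h fin01).
Qed.

Definition I (f : R -> R) : R := fine (lint P (fun x => (f x)%:E)).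

Definition good (f : R -> R) := measurable_fun (P : set T) (f : T -> R) /\
  exists M : R, forall x, P x -> `|f x| <= M.

Lemma good_int f : good f -> mu.-integrable (P : set T) (EFin \o f).
Proof.
move=> [mf [M hM]]; apply: measurable_bounded_integrable => //.
  exact: mu_fin.
exists M; split; first exact: num_real.
move=> y My x Px /=. rewrite (le_trans (hM x Px)) // ltW //.
Qed.

Lemma lintE f : good f -> lint P (fun x => (f x)%:E) = (I f)%:E.
Proof. move=> gf; rewrite /I fineK //. have h := integrable_fin_num mP' (good_int _ gf). rewrite /lint. exact: h. Qed.

Lemma good_ext f g : (forall x, f x = g x) -> good g -> good f.
Proof. by move=> fg; rewrite (_ : f = g) //; apply/funext. Qed.

Lemma I_ext f g : (forall x, f x = g x) -> I f = I g.
Proof. by move=> fg; rewrite (_ : f = g) //; apply/funext. Qed.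

Lemma good_cst c : good (fun _ => c).
Proof. split; first exact: measurable_cst. by exists `|c|. Qed.

Lemma good_id : good (fun x => x).
Proof.
split; first by move=> _ Y mY; apply: measurableI => //; apply: sub_caratheodory.
exists 1 => x /P01 /=; rewrite in_itv /= => /andP[h0 h1].
by rewrite ger0_norm.
Qed.

Lemma good_add f g : good f -> good g -> good (fun x => f x + g x).
Proof.
move=> [mf [M hM]] [mg [N hN]]; split; first exact: measurable_funD.
exists (M + N) => x Px; rewrite (le_trans (ler_normD _ _)) // lerD //; auto.
Qed.

Lemma good_mul f g : good f -> good g -> good (fun x => f x * g x).
Proof.
move=> [mf [M hM]] [mg [N hN]]; split; first exact: measurable_funM.
exists (M * N) => x Px; rewrite normrM ler_pM //; auto.
Qed.

Lemma good_sum (J : Type) (s : seq J) (F : J -> R -> R) :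
  (forall j, good (F j)) -> good (fun x => \sum_(j <- s) F j x).
Proof.
move=> gF; elim: s => [|a s ih].
  by apply: (@good_ext _ (fun _ => 0)) => [x|]; rewrite ?big_nil //; exact: good_cst.
apply: (@good_ext _ (fun x => F a x + \sum_(j <- s) F j x)) => [x|].
  by rewrite big_cons.
exact: good_add.
Qed.

Lemma good_prod (J : Type) (s : seq J) (F : J -> R -> R) :
  (forall j, good (F j)) -> good (fun x => \prod_(j <- s) F j x).
Proof.
move=> gF; elim: s => [|a s ih].
  by apply: (@good_ext _ (fun _ => 1)) => [x|]; rewrite ?big_nil //; exact: good_cst.
apply: (@good_ext _ (fun x => F a x * \prod_(j <- s) F j x)) => [x|].
  by rewrite big_cons.
exact: good_mul.
Qed.

Lemma good_exp f k : good f -> good (fun x => f x ^+ k).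
Proof.
move=> gf; elim: k => [|k ih].
  by apply: (@good_ext _ (fun _ => 1)) => [x|]; rewrite ?expr0 //; exact: good_cst.
apply: (@good_ext _ (fun x => f x * f x ^+ k)) => [x|]; first by rewrite exprS.
exact: good_mul.
Qed.

Lemma I_add f g : good f -> good g -> I (fun x => f x + g x) = I f + I g.
Proof.
move=> gf gg; apply: EFin_inj; rewrite -lintE; last exact: good_add.
rewrite EFinD -!lintE //.
rewrite /lint; under eq_integral do rewrite EFinD.
exact: integralD (good_int _ gf) (good_int _ gg).
Qed.

Lemma I_scale c f : good f -> I (fun x => c * f x) = c * I f.
Proof.
move=> gf; apply: EFin_inj; rewrite -lintE; last exact: good_mul (good_cst _) gf.
rewrite EFinM -!lintE //.
rewrite /lint; under eq_integral do rewrite EFinM.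
exact: (integralZl mP' (good_int _ gf)).
Qed.

Lemma I0 : I (fun _ => 0) = 0.
Proof. by rewrite /I /lint integral0. Qed.

Lemma I_sum (J : Type) (s : seq J) (F : J -> R -> R) :
  (forall j, good (F j)) -> I (fun x => \sum_(j <- s) F j x) = \sum_(j <- s) I (F j).
Proof.
move=> gF; elim: s => [|a s ih].
  transitivity (I (fun _ => 0)); last by rewrite I0 big_nil.
  by apply: I_ext => x; rewrite big_nil.
rewrite big_cons -ih -I_add //; last exact: good_sum.
by apply: I_ext => x; rewrite big_cons.
Qed.

Lemma I_ge0 f : (forall x, P x -> 0 <= f x) -> 0 <= I f.
Proof. by move=> h; apply: fine_ge0; apply: integral_ge0 => x Px; rewrite lee_fin h. Qed.


Lemma muP_fin : (mu P \is a fin_num)%E.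
Proof. by rewrite ge0_fin_numE ?mu_fin //; exact: measure_ge0. Qed.

Lemma I_cst c : I (fun _ => c) = c * fine (mu P).
Proof.
rewrite /I /lint (_ : (fun _ => c%:E) = cst c%:E) //.
have := integral_cst mu mP' c%:E => ->. by rewrite fineM // muP_fin.
Qed.

Lemma mset1 (a : R) : measurable ([set a] : set T).
Proof. by apply: sub_caratheodory; exact: measurable_set1. Qed.

Lemma I_gt0 f a b : good f -> (forall x, P x -> 0 <= f x) ->
  (forall x, P x -> f x = 0 -> x = a \/ x = b) -> 0 < I f.
Proof.
move=> gf f0 fab; have := I_ge0 _ f0; rewrite le_eqVlt => /orP[/eqP h|//].
exfalso.
have h1 : (\int[mu]_(x in (P : set T)) `|(f x)%:E| = 0)%E.
  rewrite -[RHS]/((0:R)%:E) h -lintE //; apply: eq_integral => x Px.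
  by rewrite gee0_abs // lee_fin f0 //; move: Px; rewrite inE.
have mf : measurable_fun (P : set T) (EFin \o f).
  by apply/measurable_EFinP; case: gf.
have := (ae_eq_integral_abs mu mP' mf).1 h1.
case=> N [mN N0 sN].
have sub : (P : set T) `<=` N `|` [set a] `|` [set b].
  move=> x Px; have [fx0|fx0] := eqVneq (f x) 0.
    by case: (fab x Px fx0) => ->; [left; right|right].
  left; left; apply: sN => /= hx; move/eqP: fx0; apply.
  by apply: EFin_inj; exact: hx Px.
have hP : (mu P <= mu (N `|` [set a] `|` [set b]))%E.
  apply: le_measure; rewrite ?inE //.
  by apply: measurableU; [apply: measurableU => //|]; exact: mset1.
have s1 (z : R) : mu [set z] = 0%E by exact: lebesgue_measure_set1.
have h2 : (mu (N `|` [set a] `|` [set b]) <= mu (N `|` [set a]) + mu [set b])%E.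
  by apply: measureU2; [apply: measurableU => //|]; exact: mset1.
have h3 : (mu (N `|` [set a]) <= mu N + mu [set a])%E.
  by apply: measureU2 => //; exact: mset1.
have : (mu P <= 0)%E.
  apply: (le_trans hP); apply: (le_trans h2); rewrite s1 adde0.
  apply: (le_trans h3); rewrite s1 adde0. have -> : mu N = 0%E by exact: N0. by [].
by rewrite leNgt; move: Ppos => /= ->.
Qed.



Definition wt (p : R) (b : bool) : R := if b then p else 1 - p.

Lemma nhE (X : {ffun 'I_n -> bool}) : nh X = #|[pred i | X i]|.
Proof. by apply: eq_card => i; rewrite memS. Qed.

Lemma qkE (X : {ffun 'I_n -> bool}) (k : 'I_n) : qk X k = #|[pred i : 'I_n | (i < k)%N && X i]|.
Proof. by apply: eq_card => i; rewrite memS. Qed.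

Lemma card_ltk (k : nat) : (k <= n)%N -> #|[pred i : 'I_n | (i < k)%N]| = k.
Proof.
move=> kn; rewrite -sum1_card.
rewrite (eq_bigl (fun i : 'I_n => (i < k)%N)) //.
by rewrite -(big_ord_widen _ (fun _ => 1%N) kn) sum1_card card_ord.
Qed.

Lemma piE (X : {ffun 'I_n -> bool}) (p : R) :
  p ^+ nh X * (1 - p) ^+ (n - nh X) = \prod_i wt p (X i).
Proof.
set S := [pred i | X i].
rewrite (bigID (fun i => i \in S)) /=.
rewrite (eq_bigr (fun _ => p)); last by move=> i; rewrite inE /wt => ->.
rewrite [Y in _ = _ * Y](eq_bigr (fun _ => 1 - p)); last by move=> i; rewrite inE /wt => /negbTE ->.
rewrite prodr_const.
rewrite (eq_bigl (fun i => i \in [predC S])); last by move=> i; rewrite inE.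
rewrite prodr_const.
have hc := cardC S; rewrite card_ord in hc.
rewrite nhE -/S.
have -> : (n - #|S| = #|[predC S]|)%N by rewrite -[X in (X - _)%N]hc addKn.
by [].
Qed.


Definition E (k : 'I_n) (Z : {ffun 'I_n -> bool}) (p : R) : R :=
  \prod_(i : 'I_n) (if (i < k)%N then wt p (Z i) else (~~ Z i)%:R).

Definition tr (k : 'I_n) (X : {ffun 'I_n -> bool}) : {ffun 'I_n -> bool} :=
  [ffun i : 'I_n => ((i < k)%N && X i)].

Lemma qk_tr k X : qk (tr k X) k = qk X k.
Proof. by rewrite !qkE; apply: eq_card => i; rewrite !inE ffunE andbA andbb. Qed.

Lemma eqR_prod (X Y : {ffun 'I_n -> bool}) :
  ((X == Y)%:R : R) = \prod_i ((X i == Y i)%:R).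
Proof.
have [->|neq] := eqVneq X Y.
  by rewrite big1 // => i _; rewrite eqxx.
have [i hi] : exists i, X i != Y i.
  apply/existsP; rewrite -negb_forall; apply: contra neq => /forallP h.
  by apply/eqP/ffunP => i; apply/eqP.
by rewrite (bigD1 i) //= (negbTE hi) mul0r.
Qed.

Lemma key k Z b p : \sum_(X : {ffun 'I_n -> bool})
    ((tr k X == Z)%:R * (X k == b)%:R * \prod_i wt p (X i)) = wt p b * E k Z p.
Proof.
pose F (i : 'I_n) (c : bool) : R :=
  wt p c * ((((i < k)%N && c) == Z i)%:R * (if i == k then (c == b)%:R else 1)).
have eX X : (tr k X == Z)%:R * (X k == b)%:R * \prod_i wt p (X i) = \prod_i F i (X i).
  rewrite /F big_split big_split /= eqR_prod.
  have -> : ((X k == b)%:R : R) = \prod_i (if i == k then (X i == b)%:R else 1).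
    by rewrite -big_mkcond big_pred1_eq.
  under eq_bigr do rewrite ffunE.
  by rewrite mulrC.
under eq_bigr do rewrite eX.
rewrite -bigA_distr_bigA.
have eF i : \sum_c F i c = (if i == k then wt p b * (~~ Z k)%:R
                             else if (i < k)%N then wt p (Z i) else (~~ Z i)%:R).
  rewrite big_bool /F.
  have [->|ik] := eqVneq i k.
    by rewrite ltnn /=; clear F eX; case: (Z k); case: b; rewrite /wt /=; ring.
  case: (i < k)%N; case: (Z i); rewrite /wt /=; ring.
rewrite (eq_bigr _ (fun i _ => eF i)) [LHS](bigD1 k) //= eqxx /E [in RHS](bigD1 k) //= ltnn.
rewrite mulrA; congr (_ * _).
by apply: eq_bigr => i /negbTE ->.
Qed.


Lemma marginal (k : 'I_n) (p : R) (G : bool -> nat -> R) :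
  \sum_(X : {ffun 'I_n -> bool}) G (X k) (qk X k) * \prod_i wt p (X i) =
  \sum_(Z : {ffun 'I_n -> bool}) \sum_(b : bool) G b (qk Z k) * (wt p b * E k Z p).
Proof.
have e1 (X : {ffun 'I_n -> bool}) : G (X k) (qk X k) * \prod_i wt p (X i) =
    \sum_(Z : {ffun 'I_n -> bool}) \sum_(b : bool)
      ((tr k X == Z)%:R * (X k == b)%:R * \prod_i wt p (X i)) * G b (qk Z k).
  rewrite (bigD1 (tr k X)) //= [Y in _ = _ + Y]big1 ?addr0; last first.
    move=> Z hZ; apply: big1 => c _; by rewrite eq_sym (negbTE hZ) !mul0r.
  rewrite big_bool eqxx qk_tr; case: (X k) => /=; ring.
under eq_bigr do rewrite e1.
rewrite exchange_big /=; apply: eq_bigr => Z _.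
rewrite exchange_big /=; apply: eq_bigr => b _.
by rewrite -mulr_suml key mulrC.
Qed.

Lemma E_zero (k : 'I_n) (Z : {ffun 'I_n -> bool}) (p : R) (i : 'I_n) : (k <= i)%N -> Z i -> E k Z p = 0.
Proof.
move=> ki Zi; rewrite /E (bigD1 i) //= ifN; last by rewrite -leqNgt.
by rewrite Zi mul0r.
Qed.

Lemma E_pos (k : 'I_n) (Z : {ffun 'I_n -> bool}) (p : R) : (forall i : 'I_n, (k <= i)%N -> Z i = false) ->
  E k Z p = p ^+ qk Z k * (1 - p) ^+ (k - qk Z k).
Proof.
move=> hZ; rewrite /E.
rewrite (eq_bigr (fun i : 'I_n => if (i < k)%N then wt p (Z i) else 1)); last first.
  move=> i _; case: ifPn => //; rewrite -leqNgt => /hZ ->; by [].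
rewrite -big_mkcond /=.
rewrite (bigID (fun i => Z i)) /=.
rewrite (eq_bigr (fun _ => p)); last by move=> i /andP[_ ->].
rewrite [Y in _ * Y = _](eq_bigr (fun _ => 1 - p)); last by move=> i /andP[_ /negbTE ->].
set S1 := [pred i : 'I_n | (i < k)%N && Z i].
set S2 := [pred i : 'I_n | (i < k)%N && ~~ Z i].
rewrite (eq_bigl (fun i : 'I_n => i \in S1)) // prodr_const.
rewrite (eq_bigl (fun i : 'I_n => i \in S2)) // prodr_const.
rewrite qkE -/S1.
have hc : (#|S1| + #|S2| = k)%N.
  rewrite -(card_ltk _ (ltnW (ltn_ord k))).
  rewrite -(cardID [pred i | Z i] [pred i : 'I_n | (i < k)%N]).
  by congr (_ + _)%N; apply: eq_card => i; rewrite !inE // andbC.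
by rewrite -hc addKn.
Qed.



Lemma gibbs_aux (a c s : R) : 0 < 1 + a * s -> 0 < 1 + c * s ->
  ln (1 + c * s) - ln (1 + a * s) = ln ((1 + c * s) / (1 + a * s)) /\
  (1 + c * s) / (1 + a * s) - 1 = - ((a - c) * s / (1 + a * s)).
Proof.
move=> ha hc; split; first by rewrite ln_div // posrE.
by field; rewrite gt_eqF.
Qed.

Lemma gibbs_le (a c s : R) : 0 < 1 + a * s -> 0 < 1 + c * s ->
  (a - c) * s / (1 + a * s) <= ln (1 + a * s) - ln (1 + c * s).
Proof.
move=> ha hc; have [e1 e2] := gibbs_aux _ _ _ ha hc.
set y := (1 + c * s) / (1 + a * s) in e1 e2.
have y0 : 0 < y by rewrite divr_gt0.
have := expR_ge1Dx (ln y); rewrite lnK ?posrE // => h.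
have : ln y <= y - 1 by lra.
rewrite -e1 e2; lra.
Qed.

Lemma gibbs_lt (a c s : R) : 0 < 1 + a * s -> 0 < 1 + c * s -> a * s != c * s ->
  (a - c) * s / (1 + a * s) < ln (1 + a * s) - ln (1 + c * s).
Proof.
move=> ha hc hne; have [e1 e2] := gibbs_aux _ _ _ ha hc.
set y := (1 + c * s) / (1 + a * s) in e1 e2.
have y0 : 0 < y by rewrite divr_gt0.
have ly : ln y != 0.
  rewrite ln_eq0 //; apply: contra hne => /eqP hy.
  have h1 : 1 + c * s = y * (1 + a * s) by rewrite /y divfK // gt_eqF.
  rewrite hy mul1r in h1.
  by apply/eqP; lra.
have := expR_gt1Dx ly; rewrite lnK ?posrE // => h.
have : ln y < y - 1 by lra.
rewrite -e1 e2; lra.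
Qed.

Hypothesis hn : (1 < n)%N.

Arguments good_add {f g}.
Arguments good_mul {f g}.
Arguments good_exp {f} k.
Arguments good_sum {J} s {F}.
Arguments good_prod {J} s {F}.
Arguments I_add {f g}.
Arguments I_scale c {f}.
Arguments I_sum {J} s {F}.
Arguments I_ge0 {f}.
Arguments lintE {f}.

Lemma in01 x : P x -> 0 <= x <= 1.
Proof. by move=> /P01 /=; rewrite in_itv. Qed.
Arguments in01 {x}.

Lemma good_1m : good (fun p => 1 - p).
Proof.
apply: (@good_ext _ (fun p => 1 + (-1) * p)) => [p|]; first by ring.
exact: good_add (good_cst _) (good_mul (good_cst _) good_id).
Qed.

Definition rho (q k : nat) (p : R) := p ^+ q * (1 - p) ^+ (k - q).

Lemma good_rho q k : good (rho q k).
Proof. exact: good_mul (good_exp _ good_id) (good_exp _ good_1m). Qed.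

Lemma rho_ge0 q k x : P x -> 0 <= rho q k x.
Proof.
move=> /in01 /andP[h0 h1]; rewrite /rho mulr_ge0 // exprn_ge0 //.
by rewrite subr_ge0.
Qed.

Lemma rho_eq0 q k x : rho q k x = 0 -> x = 0 \/ x = 1.
Proof.
have [->|x0] := eqVneq x 0; first by left.
have [->|x1] := eqVneq x 1; first by right.
move=> /eqP; rewrite /rho mulf_eq0 !expf_eq0 subr_eq0 (negbTE x0) eq_sym (negbTE x1).
by rewrite !andbF.
Qed.

Definition A q k := I (fun p => rho q k p * p).
Definition B q k := I (fun p => rho q k p * (1 - p)).

Lemma A_gt0 q k : 0 < A q k.
Proof.
apply: (I_gt0 _ 0 1).
- exact: good_mul (good_rho q k) good_id.
- by move=> x Px; have /andP[h0 h1] := in01 Px; rewrite mulr_ge0 // rho_ge0.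
- move=> x Px /eqP; rewrite mulf_eq0 => /orP[/eqP/rho_eq0 //|/eqP ->]; by left.
Qed.

Lemma B_gt0 q k : 0 < B q k.
Proof.
apply: (I_gt0 _ 0 1).
- exact: good_mul (good_rho q k) good_1m.
- by move=> x Px; have /andP[h0 h1] := in01 Px; rewrite mulr_ge0 ?rho_ge0 // subr_ge0.
- move=> x Px /eqP; rewrite mulf_eq0 subr_eq0 => /orP[/eqP/rho_eq0 //|/eqP <-]; by right.
Qed.

Definition kap q k := (A q k - B q k) / (A q k + B q k).

Lemma kap1p q k : 1 + kap q k = 2 * A q k / (A q k + B q k).
Proof.
have hA := A_gt0 q k; have hB := B_gt0 q k.
rewrite /kap; field; rewrite gt_eqF //; lra.
Qed.

Lemma kap1m q k : 1 - kap q k = 2 * B q k / (A q k + B q k).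
Proof.
have hA := A_gt0 q k; have hB := B_gt0 q k.
rewrite /kap; field; rewrite gt_eqF //; lra.
Qed.

Lemma kap_pos q k b : 0 < 1 + kap q k * sgnb R b.
Proof.
have hA := A_gt0 q k; have hB := B_gt0 q k.
case: b; rewrite /sgnb ?mulr1 ?mulrN1.
  by rewrite kap1p divr_gt0 //; lra.
by rewrite kap1m divr_gt0 //; lra.
Qed.

Lemma KstarE (X : {ffun 'I_n -> bool}) (k : 'I_n) :
  @Kstar R n P X k = kap (qk X k) k.
Proof.
rewrite (_ : @Kstar R n P X k = I (fun p => rho (qk X k) k p * (2 * p - 1)) /
                                 I (rho (qk X k) k)) //.
rewrite /kap /A /B; congr (_ / _).
  rewrite (@I_ext _ (fun p => rho (qk X k) k p * p + (-1) * (rho (qk X k) k p * (1 - p)))).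
    rewrite I_add ?I_scale; first by ring.
    - exact: good_mul (good_rho _ _) good_1m.
    - exact: good_mul (good_rho _ _) good_id.
    - exact: good_mul (good_cst _) (good_mul (good_rho _ _) good_1m).
  by move=> p; ring.
rewrite (@I_ext _ (fun p => rho (qk X k) k p * p + rho (qk X k) k p * (1 - p))).
  rewrite I_add.
  - reflexivity.
  - exact: good_mul (good_rho _ _) good_id.
  - exact: good_mul (good_rho _ _) good_1m.
by move=> p; ring.
Qed.
Definition m := fine (mu P).

Lemma m_gt0 : 0 < m.
Proof. by rewrite /m fine_gt0 // Ppos /= mu_fin. Qed.

Lemma I1 : I (fun _ => 1) = m.
Proof. by rewrite I_cst mul1r. Qed.

Definition a0 := I (fun p => p).

Lemma a0_gt0 : 0 < a0.
Proof.
apply: (I_gt0 _ 0 0); first exact: good_id.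
  by move=> x /in01 /andP[].
by move=> x _ ->; left.
Qed.

Lemma Im1 : I (fun p => 1 - p) = m - a0.
Proof.
rewrite (@I_ext _ (fun p => 1 + (-1) * p)); last by move=> p; ring.
rewrite I_add; [|exact: good_cst|exact: good_mul (good_cst _) good_id].
rewrite I_scale; last exact: good_id.
by rewrite I1 /a0; ring.
Qed.

Lemma ma0 : 0 < m - a0.
Proof.
rewrite -Im1; apply: (I_gt0 _ 1 1); first exact: good_1m.
  by move=> x /in01 /andP[_]; rewrite subr_ge0.
by move=> x _ /eqP; rewrite subr_eq0 => /eqP <-; left.
Qed.

Definition cc := 2 * pbar P - 1.

Lemma ccE : cc = 2 * (a0 / m) - 1.
Proof. rewrite /cc /pbar /a0 /I /m. reflexivity. Qed.

Lemma c_pos b : 0 < 1 + cc * sgnb R b.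
Proof.
have h1 := m_gt0; have h2 := a0_gt0; have h3 := ma0.
rewrite ccE /sgnb; case: b.
  rewrite (_ : _ + _ = 2 * a0 / m); first by rewrite divr_gt0 // mulr_gt0.
  by field; rewrite gt_eqF.
rewrite (_ : _ + _ = 2 * (m - a0) / m); first by rewrite divr_gt0 // mulr_gt0.
by field; rewrite gt_eqF.
Qed.

Definition piX (X : {ffun 'I_n -> bool}) (p : R) := p ^+ nh X * (1 - p) ^+ (n - nh X).

Definition S (K : {ffun 'I_n -> bool} -> 'I_n -> R) (X : {ffun 'I_n -> bool}) :=
  \sum_(k < n) ln (1 + K X k * sgnb R (X k)).

Lemma ELGE (K : {ffun 'I_n -> bool} -> 'I_n -> R)
  (hK : forall X k, 0 < 1 + K X k * sgnb R (X k)) p :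
  ELG K p = ((n%:R)^-1 * \sum_(X : {ffun 'I_n -> bool}) (piX X p * S K X))%:E.
Proof.
rewrite /ELG.
have e (X : {ffun 'I_n -> bool}) :
    (\sum_(k < n) logE (1 + K X k * sgnb R (X k)))%E = (S K X)%:E.
  by rewrite /S -sumEFin; apply: eq_bigr => k _; rewrite /logE hK.
under eq_bigr do rewrite e -EFinM.
by rewrite sumEFin -EFinM.
Qed.

Lemma good_piX X : good (piX X).
Proof. exact: good_mul (good_exp _ good_id) (good_exp _ good_1m). Qed.

Lemma lint_ELG (K : {ffun 'I_n -> bool} -> 'I_n -> R)
  (hK : forall X k, 0 < 1 + K X k * sgnb R (X k)) :
  lint P (ELG K) =
  ((n%:R)^-1 * \sum_(X : {ffun 'I_n -> bool}) (I (piX X) * S K X))%:E.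
Proof.
have -> : ELG K = (fun p => ((n%:R)^-1 *
    \sum_(X : {ffun 'I_n -> bool}) (piX X p * S K X))%:E).
  by apply/funext => p; exact: ELGE.
have gX (X : {ffun 'I_n -> bool}) : good (fun p => piX X p * S K X).
  exact: good_mul (good_piX X) (good_cst _).
rewrite lintE; last exact: good_mul (good_cst _) (good_sum _ gX).
rewrite I_scale; last exact: good_sum _ gX.
rewrite I_sum; last exact: gX.
congr ((_ * _)%:E); apply: eq_bigr => X _.
rewrite (@I_ext _ (fun p => S K X * piX X p)); last by move=> p; rewrite mulrC.
rewrite I_scale; last exact: good_piX.
by rewrite mulrC.
Qed.
Definition G (k : 'I_n) (b : bool) (q : nat) : R :=
  (kap q k - cc) * sgnb R b / (1 + kap q k * sgnb R b).

Lemma good_wt b : good (fun p => wt p b).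
Proof. by case: b; [exact: good_id | exact: good_1m]. Qed.

Lemma good_E k Z : good (fun p => E k Z p).
Proof.
rewrite /E.
apply: (@good_prod _ (index_enum 'I_n)
  (fun i p => if (i < k)%N then wt p (Z i) else (~~ Z i)%:R)) => i.
by case: (i < k)%N; [exact: good_wt | exact: good_cst].
Qed.

Lemma marg0 (k : 'I_n) :
  \sum_(X : {ffun 'I_n -> bool}) I (piX X) * G k (X k) (qk X k) = 0.
Proof.
have gG (X : {ffun 'I_n -> bool}) : good (fun p => G k (X k) (qk X k) * piX X p).
  exact: good_mul (good_cst _) (good_piX X).
transitivity (I (fun p => \sum_(X : {ffun 'I_n -> bool}) G k (X k) (qk X k) * piX X p)).
  rewrite I_sum; last exact: gG.
  apply: eq_bigr => X _; rewrite I_scale; last exact: good_piX.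
  by rewrite mulrC.
rewrite (@I_ext _ (fun p => \sum_(Z : {ffun 'I_n -> bool}) \sum_(b : bool)
           G k b (qk Z k) * (wt p b * E k Z p))); last first.
  move=> p; rewrite -marginal; apply: eq_bigr => X _; by rewrite /piX piE.
have gZb (Z : {ffun 'I_n -> bool}) b :
    good (fun p => G k b (qk Z k) * (wt p b * E k Z p)).
  exact: good_mul (good_cst _) (good_mul (good_wt b) (good_E k Z)).
rewrite I_sum; last by move=> Z; apply: good_sum => b; exact: gZb.
apply: big1 => Z _.
rewrite I_sum; last exact: gZb Z.
rewrite (eq_bigr (fun b => G k b (qk Z k) * I (fun p => wt p b * E k Z p))); last first.
  move=> b _; rewrite I_scale; last exact: good_mul (good_wt b) (good_E k Z).
  by [].
rewrite big_bool.
case: (boolP [exists i : 'I_n, (k <= i)%N && Z i]) => [/existsP[i /andP[ki Zi]] | /existsPn hZ].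
  have e b : I (fun p => wt p b * E k Z p) = 0.
    rewrite -I0; apply: I_ext => p; by rewrite (E_zero _ _ p _ ki Zi) mulr0.
  by rewrite !e !mulr0 /= addr0.
have hZ' : forall i : 'I_n, (k <= i)%N -> Z i = false.
  by move=> i ki; move: (hZ i); rewrite ki /= => /negbTE.
rewrite (@I_ext (fun p => wt p true * E k Z p) (fun p => rho (qk Z k) k p * p)); last first.
  by move=> p; rewrite (E_pos _ _ _ hZ') /rho /wt mulrC.
rewrite (@I_ext (fun p => wt p false * E k Z p) (fun p => rho (qk Z k) k p * (1 - p))); last first.
  by move=> p; rewrite (E_pos _ _ _ hZ') /rho /wt mulrC.
rewrite -/(A _ _) -/(B _ _) /=.
have hA := A_gt0 (qk Z k) k; have hB := B_gt0 (qk Z k) k.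
rewrite /G /sgnb !mulr1 !mulrN1 kap1p kap1m.
field.
by rewrite !gt_eqF // ?mulr_gt0 // ?divr_gt0 ?mulr_gt0 //; lra.
Qed.
Lemma w_gt0 (X : {ffun 'I_n -> bool}) : 0 < I (piX X).
Proof.
apply: (I_gt0 _ 0 1); first exact: good_piX.
  by move=> x Px; exact: (rho_ge0 (nh X) n x Px).
by move=> x _ /(rho_eq0 (nh X) n x).
Qed.

Lemma sum_lt (J : finType) (F F' : J -> R) j0 :
  (forall j, F j <= F' j) -> F j0 < F' j0 -> \sum_j F j < \sum_j F' j.
Proof.
move=> hle hlt; rewrite (bigD1 j0) //= [X in _ < X](bigD1 j0) //=.
by apply: ltr_leD => //; apply: ler_sum => j _; exact: hle.
Qed.

Definition al := I (fun p => p * (1 - p)).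
Definition be := I (fun p => p * p).
Definition ga := I (fun p => (1 - p) * (1 - p)).

Lemma A11 : A 1 1 = be.
Proof. by apply: I_ext => p; rewrite /rho subnn expr1 expr0 mulr1. Qed.
Lemma B11 : B 1 1 = al.
Proof. by apply: I_ext => p; rewrite /rho subnn expr1 expr0 mulr1. Qed.
Lemma A01 : A 0 1 = al.
Proof. by apply: I_ext => p; rewrite /rho subn0 expr1 expr0 mul1r mulrC. Qed.
Lemma B01 : B 0 1 = ga.
Proof. by apply: I_ext => p; rewrite /rho subn0 expr1 expr0 mul1r. Qed.

Lemma var_pos : 0 < be * ga - al ^+ 2.
Proof.
have hb : 0 < be by rewrite -A11; exact: A_gt0.
have ha : 0 < al by rewrite -B11; exact: B_gt0.
have gpp : good (fun p => p * p) by exact: good_mul good_id good_id.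
have gp1 : good (fun p => p * (1 - p)) by exact: good_mul good_id good_1m.
have g11 : good (fun p => (1 - p) * (1 - p)) by exact: good_mul good_1m good_1m.
have hV : I (fun p => (be * (1 - p) - al * p) ^+ 2) = be * (be * ga - al ^+ 2).
  rewrite (@I_ext _ (fun p => (be ^+ 2 * ((1 - p) * (1 - p)) +
             (- (2 * al * be)) * (p * (1 - p))) + al ^+ 2 * (p * p))); last first.
    by move=> p; ring.
  rewrite I_add; [| exact: good_add (good_mul (good_cst _) g11) (good_mul (good_cst _) gp1)
                  | exact: good_mul (good_cst _) gpp].
  rewrite I_add; [|exact: good_mul (good_cst _) g11|exact: good_mul (good_cst _) gp1].
  rewrite (I_scale _ g11) (I_scale _ gp1) (I_scale _ gpp).
  rewrite -/al -/be -/ga; ring.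
have : 0 < I (fun p => (be * (1 - p) - al * p) ^+ 2).
  apply: (I_gt0 _ (be / (al + be)) (be / (al + be))).
  - apply: good_exp; apply: (@good_ext _ (fun p => be * (1 - p) + (- al) * p)).
      by move=> p; ring.
    exact: good_add (good_mul (good_cst _) good_1m) (good_mul (good_cst _) good_id).
  - by move=> x _; rewrite sqr_ge0.
  - move=> x _ /eqP; rewrite sqrf_eq0 subr_eq0 => /eqP h; left.
    have hab : al + be != 0 by rewrite gt_eqF // addr_gt0.
    apply: (mulIf hab); rewrite divfK //.
    by move: h; nra.
rewrite hV => h.
by rewrite -(pmulr_rgt0 _ hb).
Qed.

Lemma kap_neq : kap 1 1 != kap 0 1.
Proof.
have hb : 0 < be by rewrite -A11; exact: A_gt0.
have ha : 0 < al by rewrite -B11; exact: B_gt0.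
have hg : 0 < ga by rewrite -B01; exact: B_gt0.
have hv := var_pos.
have n1 : be + al != 0 by rewrite gt_eqF // addr_gt0.
have n2 : al + ga != 0 by rewrite gt_eqF // addr_gt0.
rewrite /kap A11 B11 A01 B01 (eqr_div _ _ n1 n2).
apply/negP => /eqP h.
move: hv h; nra.
Qed.
Definition k1 : 'I_n := Ordinal hn.

Lemma qk_true : qk [ffun _ : 'I_n => true] k1 = 1%N.
Proof.
rewrite qkE -(card_ltk 1 (ltnW hn)); apply: eq_card => i.
by rewrite !inE ffunE andbT.
Qed.

Lemma qk_false : qk [ffun _ : 'I_n => false] k1 = 0%N.
Proof. by rewrite qkE; apply: eq_card0 => i; rewrite !inE ffunE andbF. Qed.

Lemma exX0 : exists X0 : {ffun 'I_n -> bool}, kap (qk X0 k1) k1 != cc.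
Proof.
have h := kap_neq.
case: (eqVneq (kap 1 1) cc) => [e|ne].
  exists [ffun _ => false]; rewrite qk_false -e eq_sym; exact: h.
by exists [ffun _ => true]; rewrite qk_true; exact: ne.
Qed.

Lemma main_ineq :
  \sum_(X : {ffun 'I_n -> bool}) I (piX X) * S (@static_ctrl R n cc) X <
  \sum_(X : {ffun 'I_n -> bool}) I (piX X) * S (@Kstar R n P) X.
Proof.
rewrite -subr_gt0 -sumrB.
pose D := fun (X : {ffun 'I_n -> bool}) (k : 'I_n) =>
   ln (1 + kap (qk X k) k * sgnb R (X k)) - ln (1 + cc * sgnb R (X k)).
have d (X : {ffun 'I_n -> bool}) :
    I (piX X) * S (@Kstar R n P) X - I (piX X) * S (@static_ctrl R n cc) X
    = I (piX X) * \sum_(k < n) D X k.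
  rewrite -mulrBr /S -sumrB; congr (_ * _); apply: eq_bigr => k _.
  by rewrite KstarE /static_ctrl.
rewrite (eq_bigr _ (fun X _ => d X)).
have z : \sum_(X : {ffun 'I_n -> bool}) I (piX X) * \sum_(k < n) G k (X k) (qk X k) = 0.
  rewrite (eq_bigr (fun X => \sum_(k < n) I (piX X) * G k (X k) (qk X k))); last first.
    by move=> X _; rewrite mulr_sumr.
  rewrite exchange_big /=; apply: big1 => k _; exact: marg0.
suff hlt : \sum_(X : {ffun 'I_n -> bool}) I (piX X) * \sum_(k < n) G k (X k) (qk X k) <
   \sum_(X : {ffun 'I_n -> bool}) I (piX X) * \sum_(k < n) D X k by rewrite z in hlt.
have [X0 hX0] := exX0.
apply: (@sum_lt _ _ _ X0) => [X|].
  apply: ler_wpM2l; first exact: ltW (w_gt0 X).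
  apply: ler_sum => k _; exact: gibbs_le (kap_pos _ _ _) (c_pos _).
rewrite ltr_pM2l; last exact: w_gt0.
apply: (@sum_lt _ _ _ k1) => [k|].
  exact: gibbs_le (kap_pos _ _ _) (c_pos _).
apply: gibbs_lt; [exact: kap_pos | exact: c_pos |].
by rewrite /sgnb; case: (X0 k1); rewrite ?mulr1 ?mulrN1 ?eqr_opp.
Qed.

Lemma final : (lint P (ELG (@Kstar R n P)) >
   lint P (ELG (@static_ctrl R n (2 * pbar P - 1))))%E.
Proof.
have hK : forall (X : {ffun 'I_n -> bool}) (k : 'I_n), 0 < 1 + @Kstar R n P X k * sgnb R (X k).
  by move=> X k; rewrite KstarE; exact: kap_pos.
have hc : forall (X : {ffun 'I_n -> bool}) (k : 'I_n),
    0 < 1 + @static_ctrl R n cc X k * sgnb R (X k).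
  by move=> X k; exact: c_pos.
rewrite -/cc (lint_ELG _ hK) (lint_ELG _ hc) lte_fin ltr_pM2l; first exact: main_ineq.
by rewrite invr_gt0 ltr0n (ltnW hn).
Qed.

End Main.



Theorem mainTheorem4 (R : realType) (n : nat) (P : set R) :
  (1 < n)%N ->
  lmeasurable P ->
  P `<=` `[0, 1] ->
  (0 < lmu P)%E ->
  (lint P (ELG (@Kstar R n P)) >
   lint P (ELG (@static_ctrl R n (2 * pbar P - 1))))%E.
Proof.
move=> hn mP P01 Ppos.
exact: (@final R n P mP P01 Ppos hn).
Qed.
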